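(* Let $\mathbf{g}\in H_{1,2,2}$ and let $s$ be a positive integer with $2^s \mid N(\mathbf{g})$. Then $(1+\mathbf{i})^s$ divides $\mathbf{g}$ on the left and on the right in $H_{1,2,2}$, i.e. there exist $\mathbf{h},\mathbf{h}'\in H_{1,2,2}$ with $\mathbf{g}=(1+\mathbf{i})^s\mathbf{h}=\mathbf{h}'(1+\mathbf{i})^s$.
   Context: Let $\mathbf{i},\mathbf{j},\mathbf{k}$ be the standard basis units of the real quaternions; the conjugate of $\mathbf{q}=q_1+q_2\mathbf{i}+q_3\mathbf{j}+q_4\mathbf{k}$ is $\overline{\mathbf{q}}=q_1-q_2\mathbf{i}-q_3\mathbf{j}-q_4\mathbf{k}$ and $N(\mathbf{q})=\mathbf{q}\overline{\mathbf{q}}$. $H_{1,2,2}$ is the $\mathbb{Z}$-module (a subring of the quaternions) generated by $\mathbf{v}_1=1$, $\mathbf{v}_2=\mathbf{i}$, $\mathbf{v}_3=\tfrac12(1+\mathbf{i}+\sqrt2\,\mathbf{j})$, $\mathbf{v}_4=\tfrac12(1+\mathbf{i}+\sqrt2\,\mathbf{k})$; the norm takes nonnegative integer values on it. *)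

(* Defs.v *)
From Stdlib Require Import Reals ZArith.
Open Scope R_scope.

Record quat := Quat { q1 : R; q2 : R; q3 : R; q4 : R }.

Definition qadd (p q : quat) : quat :=
  Quat (q1 p + q1 q) (q2 p + q2 q) (q3 p + q3 q) (q4 p + q4 q).

(* Hamilton product: i^2 = j^2 = k^2 = ijk = -1 *)
Definition qmul (p q : quat) : quat :=
  Quat (q1 p * q1 q - q2 p * q2 q - q3 p * q3 q - q4 p * q4 q)
       (q1 p * q2 q + q2 p * q1 q + q3 p * q4 q - q4 p * q3 q)
       (q1 p * q3 q - q2 p * q4 q + q3 p * q1 q + q4 p * q2 q)
       (q1 p * q4 q + q2 p * q3 q - q3 p * q2 q + q4 p * q1 q).

Definition qscale (r : R) (q : quat) : quat :=
  Quat (r * q1 q) (r * q2 q) (r * q3 q) (r * q4 q).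

Definition qofR (r : R) : quat := Quat r 0 0 0.

Definition qone : quat := qofR 1.
Definition qi : quat := Quat 0 1 0 0.
Definition qj : quat := Quat 0 0 1 0.
Definition qk : quat := Quat 0 0 0 1.

Definition qconj (q : quat) : quat := Quat (q1 q) (- q2 q) (- q3 q) (- q4 q).

(* N(q) = q * conj q (a quaternion which is a real scalar) *)
Definition qN (q : quat) : quat := qmul q (qconj q).

Fixpoint qpow (q : quat) (n : nat) : quat :=
  match n with
  | O => qone
  | S n' => qmul q (qpow q n')
  end.

Definition v1 : quat := qone.
Definition v2 : quat := qi.
Definition v3 : quat := qscale (1/2) (qadd (qadd qone qi) (qscale (sqrt 2) qj)).
Definition v4 : quat := qscale (1/2) (qadd (qadd qone qi) (qscale (sqrt 2) qk)).

Definition in_H122 (q : quat) : Prop :=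
  exists a b c d : Z,
    q = qadd (qadd (qscale (IZR a) v1) (qscale (IZR b) v2))
             (qadd (qscale (IZR c) v3) (qscale (IZR d) v4)).

(* Main.v *)
Require Import Defs.
From Stdlib Require Import Reals ZArith Lia Lra.
Open Scope R_scope.

Lemma sqpar t : exists w, (t*t = t + 2*w)%Z.
Proof. destruct (Z.Even_or_Odd t) as [[k ->]|[k ->]]; [exists (2*k*k-k)%Z|exists (2*k*k+k)%Z]; ring. Qed.

Lemma par a b c d m : ((2*a+c+d)^2+(2*b+c+d)^2+2*c^2+2*d^2 = 8*m)%Z ->
  ((c+d) mod 2 = 0 /\ (a+b+c) mod 2 = 0)%Z.
Proof.
intro H.
destruct (Z.Even_or_Odd a) as [[a1 ->]|[a1 ->]];
destruct (Z.Even_or_Odd b) as [[b1 ->]|[b1 ->]];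
destruct (Z.Even_or_Odd c) as [[c1 ->]|[c1 ->]];
destruct (Z.Even_or_Odd d) as [[d1 ->]|[d1 ->]];
destruct (sqpar a1) as [wa Ha];
destruct (sqpar b1) as [wb Hb];
destruct (sqpar c1) as [wc Hc];
destruct (sqpar d1) as [wd Hd]; Z.to_euclidean_division_equations; lia.
Qed.

Definition emb (a b c d : Z) : quat :=
  qadd (qadd (qscale (IZR a) v1) (qscale (IZR b) v2))
       (qadd (qscale (IZR c) v3) (qscale (IZR d) v4)).

Lemma emb_eq a b c d : emb a b c d =
  Quat (IZR a + (IZR c + IZR d)/2) (IZR b + (IZR c + IZR d)/2)
       (IZR c * sqrt 2 / 2) (IZR d * sqrt 2 / 2).
Proof. unfold emb, v1, v2, v3, v4, qadd, qscale, qone, qofR, qi, qj, qk; simpl; f_equal; field. Qed.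

Definition nrm (q : quat) := q1 q * q1 q + q2 q * q2 q + q3 q * q3 q + q4 q * q4 q.

Lemma qN_nrm q : qN q = Quat (nrm q) 0 0 0.
Proof. destruct q; unfold qN, qmul, qconj, nrm; simpl; f_equal; ring. Qed.

Lemma sqrt2sq : sqrt 2 * sqrt 2 = 2.
Proof. apply sqrt_sqrt; lra. Qed.

Lemma nrm_emb a b c d : 4 * nrm (emb a b c d) =
  IZR ((2*a+c+d)^2+(2*b+c+d)^2+2*c^2+2*d^2)%Z.
Proof.
rewrite emb_eq; unfold nrm; cbn [q1 q2 q3 q4].
assert (E : forall x, (x * sqrt 2 / 2) * (x * sqrt 2 / 2) = x * x / 2).
{ intro x. replace ((x * sqrt 2 / 2) * (x * sqrt 2 / 2)) with (x*x*(sqrt 2 * sqrt 2)/4) by field.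
  rewrite sqrt2sq; field. }
rewrite !E.
rewrite !Z.pow_2_r; repeat rewrite ?plus_IZR, ?mult_IZR. field.
Qed.

Definition P := qadd qone qi.

Lemma qmul_assoc p q r : qmul p (qmul q r) = qmul (qmul p q) r.
Proof. destruct p, q, r; unfold qmul; simpl; f_equal; ring. Qed.

Lemma qpow_comm n : qmul (qpow P n) P = qmul P (qpow P n).
Proof.
induction n; simpl.
- unfold P, qone, qofR, qadd, qi, qmul; simpl; f_equal; ring.
- rewrite <- qmul_assoc, IHn. reflexivity.
Qed.

Lemma nrm_ext q x : qN q = qofR x -> nrm q = x.
Proof. rewrite qN_nrm; unfold qofR; intro H; injection H; auto. Qed.

Lemma ext_nrm q x : nrm q = x -> qN q = qofR x.
Proof. rewrite qN_nrm; unfold qofR; intros ->; auto. Qed.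

Lemma divcond a b c d m : nrm (emb a b c d) = IZR (2 * m) ->
  ((c+d) mod 2 = 0 /\ (a+b+c) mod 2 = 0)%Z.
Proof.
intro H. apply (par a b c d m). apply eq_IZR.
rewrite <- nrm_emb, H, !mult_IZR. simpl. ring.
Qed.

Lemma nrm_left q : nrm (qmul P q) = 2 * nrm q.
Proof. destruct q; unfold P, nrm, qmul, qadd, qone, qofR, qi; simpl; ring. Qed.
Lemma nrm_right q : nrm (qmul q P) = 2 * nrm q.
Proof. destruct q; unfold P, nrm, qmul, qadd, qone, qofR, qi; simpl; ring. Qed.

Lemma left_div g m : in_H122 g -> nrm g = IZR (2 * m) ->
  exists h, in_H122 h /\ g = qmul P h /\ nrm h = IZR m.
Proof.
intros [a [b [c [d Hg]]]] Hn. fold (emb a b c d) in Hg. subst g.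
destruct (divcond a b c d m Hn) as [H1 H2].
set (a' := ((a+b+c)/2)%Z). set (b' := ((b-a-d)/2)%Z).
set (c' := ((c+d)/2)%Z). set (d' := ((d-c)/2)%Z).
assert (E : emb a b c d = qmul P (emb a' b' c' d')).
{ assert (Ea : a = (a' - b' - c')%Z) by (unfold a', b', c'; Z.to_euclidean_division_equations; lia).
  assert (Eb : b = (a' + b' + d')%Z) by (unfold a', b', d'; Z.to_euclidean_division_equations; lia).
  assert (Ec : c = (c' - d')%Z) by (unfold c', d'; Z.to_euclidean_division_equations; lia).
  assert (Ed : d = (c' + d')%Z) by (unfold c', d'; Z.to_euclidean_division_equations; lia).
  clearbody a' b' c' d'. subst a b c d.
  rewrite !emb_eq. unfold P, qmul, qadd, qone, qofR, qi; simpl.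
  rewrite !minus_IZR, !plus_IZR. f_equal; field. }
exists (emb a' b' c' d'). split; [exists a', b', c', d'; reflexivity|]. split; [exact E|].
rewrite E, nrm_left, mult_IZR in Hn. simpl in Hn. lra.
Qed.

Lemma right_div g m : in_H122 g -> nrm g = IZR (2 * m) ->
  exists h, in_H122 h /\ g = qmul h P /\ nrm h = IZR m.
Proof.
intros [a [b [c [d Hg]]]] Hn. fold (emb a b c d) in Hg. subst g.
destruct (divcond a b c d m Hn) as [H1 H2].
set (a' := ((a+b+d)/2)%Z). set (b' := ((b-a-c)/2)%Z).
set (c' := ((c-d)/2)%Z). set (d' := ((c+d)/2)%Z).
assert (E : emb a b c d = qmul (emb a' b' c' d') P).
{ assert (Ea : a = (a' - b' - d')%Z) by (unfold a', b', d'; Z.to_euclidean_division_equations; lia).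
  assert (Eb : b = (a' + b' + c')%Z) by (unfold a', b', c'; Z.to_euclidean_division_equations; lia).
  assert (Ec : c = (c' + d')%Z) by (unfold c', d'; Z.to_euclidean_division_equations; lia).
  assert (Ed : d = (d' - c')%Z) by (unfold c', d'; Z.to_euclidean_division_equations; lia).
  clearbody a' b' c' d'. subst a b c d.
  rewrite !emb_eq. unfold P, qmul, qadd, qone, qofR, qi; simpl.
  rewrite !minus_IZR, !plus_IZR. f_equal; field. }
exists (emb a' b' c' d'). split; [exists a', b', c', d'; reflexivity|]. split; [exact E|].
rewrite E, nrm_right, mult_IZR in Hn. simpl in Hn. lra.
Qed.

Lemma qone_l q : qmul qone q = q.
Proof. destruct q; unfold qmul, qone, qofR; simpl; f_equal; ring. Qed.
Lemma qone_r q : qmul q qone = q.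
Proof. destruct q; unfold qmul, qone, qofR; simpl; f_equal; ring. Qed.

Lemma pow2S s m : (2 ^ Z.of_nat (S s) * m = 2 * (2 ^ Z.of_nat s * m))%Z.
Proof. rewrite Nat2Z.inj_succ, Z.pow_succ_r by lia. ring. Qed.

Lemma left_ind s : forall g m, in_H122 g -> nrm g = IZR (2 ^ Z.of_nat s * m)%Z ->
  exists h, in_H122 h /\ g = qmul (qpow P s) h.
Proof.
induction s; intros g m Hg Hn.
- exists g. split; auto. simpl. now rewrite qone_l.
- rewrite pow2S in Hn. destruct (left_div _ _ Hg Hn) as [h1 [Hh1 [E1 N1]]].
  destruct (IHs _ _ Hh1 N1) as [h2 [Hh2 E2]].
  exists h2. split; auto. rewrite E1, E2, qmul_assoc. reflexivity.
Qed.

Lemma right_ind s : forall g m, in_H122 g -> nrm g = IZR (2 ^ Z.of_nat s * m)%Z ->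
  exists h, in_H122 h /\ g = qmul h (qpow P s).
Proof.
induction s; intros g m Hg Hn.
- exists g. split; auto. simpl. now rewrite qone_r.
- rewrite pow2S in Hn. destruct (right_div _ _ Hg Hn) as [h1 [Hh1 [E1 N1]]].
  destruct (IHs _ _ Hh1 N1) as [h2 [Hh2 E2]].
  exists h2. split; auto. rewrite E1, E2, <- qmul_assoc, qpow_comm. reflexivity.
Qed.

Theorem corollary4 (g : quat) (s : nat) :
  in_H122 g ->
  (0 < s)%nat ->
  (exists m : Z, qN g = qofR (IZR (2 ^ Z.of_nat s * m)%Z)) ->
  exists h h' : quat,
    in_H122 h /\ in_H122 h' /\
    g = qmul (qpow (qadd qone qi) s) h /\
    g = qmul h' (qpow (qadd qone qi) s).
Proof.
intros Hg _ [m Hm]. apply nrm_ext in Hm.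
destruct (left_ind s g m Hg Hm) as [h [Hh E]].
destruct (right_ind s g m Hg Hm) as [h' [Hh' E']].
exists h, h'. auto.
Qed.
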